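(* For every objective $f_j:S_j\to[0,1]$ and every common prior $\mathbb{CP}_j$ on $S_j$, if the $N$ agents all condition on $\mathbb{CP}_j$ and communicate via the spanning-tree protocol, they globally $\langle\varepsilon_j,\delta_j\rangle$-agree (i.e. $\Pr(|E^{i,T}_j-E^{k,T}_j|\le\varepsilon_j)>1-\delta_j$ for all pairs $i,k$) after $O\!\left(N^7/(\delta_j\varepsilon_j)^2\right)$ additional messages.
   Context: Task $j$ has finite state space $S_j$ and objective $f_j$. Agents hold knowledge partitions $\Pi^{i,t}_j$ of $S_j$ (common knowledge initially), refined upon receiving messages; after conditioning on a common prior $\mathbb{CP}_j$, agent $i$'s expectation is $E^{i,t}_j=\mathbb E_{\mathbb{CP}_j}[f_j\mid\Pi^{i,t}_j(s)]$. Spanning-tree protocol: agents communicate over a strongly connected directed graph on $[N]$ using an outward and an inward spanning tree rooted at agent $1$, each of diameter $g_j=O(N)$ (worst-case ring), cycling through their edges so that each block of $O(g_j)$ messages forwards every agent's current expectation to every other agent. *)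

(* Defs.v *)
From mathcomp Require Import all_boot all_order all_algebra.
Set Implicit Arguments. Unset Strict Implicit. Unset Printing Implicit Defensive.
Import Order.TTheory GRing.Theory Num.Theory.
Local Open Scope ring_scope.

Section Knowledge.
Variables (R : realFieldType) (S : finType).

(** A knowledge partition is given by its cell function: [Pi s] is the cell
    containing state [s]. *)
Definition is_partition (Pi : S -> {set S}) : Prop :=
  forall s, s \in Pi s /\ (forall s', s' \in Pi s -> Pi s' = Pi s).

Definition is_prior (P : S -> R) : Prop :=
  (forall s, 0 <= P s) /\ \sum_s P s = 1.

(** E[f | Pi(s)] under the prior P (0/0 = 0 on null cells). *)
Definition cond_exp (P f : S -> R) (Pi : S -> {set S}) (s : S) : R :=
  (\sum_(s' in Pi s) P s' * f s') / (\sum_(s' in Pi s) P s').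

Definition prob (P : S -> R) (A : pred S) : R := \sum_(s | A s) P s.

Definition refine (Pi : S -> {set S}) (g : S -> R) : S -> {set S} :=
  fun s => Pi s :&: [set s' | g s' == g s].

Variable A : eqType.

(** Knowledge partitions at time t: at step t the message
    (sched t).1 -> (sched t).2 carries the sender's current expectation,
    and the receiver conditions on it. *)
Fixpoint knowledge (P f : S -> R) (Pi0 : A -> S -> {set S})
    (sched : nat -> A * A) (t : nat) : A -> S -> {set S} :=
  match t with
  | 0 => Pi0
  | t'.+1 =>
      let K := knowledge P f Pi0 sched t' in
      fun i => if i == (sched t').2
               then refine (K i) (cond_exp P f (K (sched t').1))
               else K i
  end.

Definition expectation P f Pi0 sched t (i : A) : S -> R :=
  cond_exp P f (knowledge P f Pi0 sched t i).

End Knowledge.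

Section SpanningTree.
Variable n : nat. (* agents are 'I_n.+1, agent "1" is the root ord0 *)
Local Notation Ag := 'I_n.+1.

Definition depth (p : Ag -> Ag) (v : Ag) : nat :=
  find (fun k => iter k p v == ord0) (iota 0 n.+1).

Definition in_tree (e : rel Ag) (p : Ag -> Ag) : Prop :=
  p ord0 = ord0 /\ forall v, iter n p v = ord0 /\ (v != ord0 -> e v (p v)).

Definition out_tree (e : rel Ag) (p : Ag -> Ag) : Prop :=
  p ord0 = ord0 /\ forall v, iter n p v = ord0 /\ (v != ord0 -> e (p v) v).

Definition nonroot : seq Ag := [seq v <- enum Ag | v != ord0].

(** One block of the spanning-tree protocol: the inward-tree edges from the
    leaves up to the root (decreasing depth), then the outward-tree edges
    from the root down to the leaves (increasing depth). *)
Definition st_block (pin pout : Ag -> Ag) : seq (Ag * Ag) :=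
  [seq (v, pin v) | v <- sort (fun u v => depth pin v <= depth pin u)%N nonroot]
  ++ [seq (pout v, v) | v <- sort (fun u v => depth pout u <= depth pout v)%N nonroot].

Definition st_sched (pin pout : Ag -> Ag) (t : nat) : Ag * Ag :=
  nth (ord0, ord0) (st_block pin pout) (t %% size (st_block pin pout)).

End SpanningTree.

(* Main.v *)
Require Import Defs.
From mathcomp Require Import all_boot all_order all_algebra.
From mathcomp Require Import lra ring zify.
Set Implicit Arguments. Unset Strict Implicit. Unset Printing Implicit Defensive.
Import Order.TTheory GRing.Theory Num.Theory.
Local Open Scope ring_scope.


Section Gen.
Variables (R : realFieldType) (S : finType) (P f : S -> R).
Hypothesis P0 : forall s, 0 <= P s.

Definition ip (X Y : S -> R) := \sum_s P s * X s * Y s.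
Definition sq (X : S -> R) := ip X X.
Definition cst (G : S -> {set S}) (X : S -> R) := forall s s', s' \in G s -> X s' = X s.
Definition c (G : S -> {set S}) := cond_exp P f G.
Definition phi (G : S -> {set S}) := sq (c G).

Lemma part_sym (G : S -> {set S}) : is_partition G -> forall s s', (s' \in G s) = (s \in G s').
Proof.
move=> HG s s'; apply/idP/idP => H.
- by have [_ ->] := HG s; [case: (HG s)|].
- by have [_ ->] := HG s'; [case: (HG s')|].
Qed.

Lemma c_cst (G : S -> {set S}) : is_partition G -> cst G (c G).
Proof. by move=> HG s s' H; rewrite /c /cond_exp (proj2 (HG s) s' H). Qed.

Lemma tower (G : S -> {set S}) X : is_partition G -> cst G X -> ip X (c G) = ip X f.
Proof.
move=> HG HX; rewrite /ip /c /cond_exp.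
transitivity (\sum_s \sum_(s' in G s) P s * X s * (P s' * f s') / (\sum_(t in G s) P t)).
  apply: eq_bigr => s _; rewrite mulrA big_distrr /= mulr_suml; apply: eq_bigr => s' _.
  by rewrite mulrA.
rewrite (exchange_big_dep xpredT) //=.
apply: eq_bigr => s' _.
pose Z := \sum_(t in G s') P t.
have ZP : forall s, s \in G s' -> \sum_(t in G s) P t = Z.
  by move=> s Hs; rewrite /Z (proj2 (HG s') s Hs).
transitivity (\sum_(s in G s') P s * X s' * (P s' * f s') / Z).
  apply: eq_big => [s|s Hs]; first by rewrite part_sym.
  have Hs' : s \in G s' by rewrite -part_sym.
  by rewrite (ZP s) // (HX s' s Hs') // mulrA.
rewrite -big_distrl -big_distrl /= -/Z.
have [Z0|Zn0] := eqVneq Z 0.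
  have : P s' = 0.
    apply/eqP; rewrite eq_le P0 andbT -Z0 /Z.
    by rewrite (bigD1 s') ?(proj1 (HG s')) //= lerDl sumr_ge0.
  by move=> ->; rewrite !mul0r mulr0 mul0r.
rewrite -mulr_suml -/Z; by field.
Qed.

Lemma sq_ge0 X : 0 <= sq X.
Proof. by apply: sumr_ge0 => s _; rewrite -mulrA mulr_ge0 // -expr2 sqr_ge0. Qed.

Lemma sq_diff (G H : S -> {set S}) : is_partition G -> is_partition H ->
  cst G (c H) -> sq (fun s => c G s - c H s) = phi G - phi H.
Proof.
move=> HG HH Hc.
have e1 : ip (c H) (c G) = ip (c H) (c H).
  by rewrite tower // tower //; apply: c_cst.
have e2 : sq (fun s => c G s - c H s) = phi G - 2 * ip (c H) (c G) + phi H.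
  rewrite /phi /sq /ip mulr_sumr -sumrN -!big_split /=; apply: eq_bigr => s _; ring.
by rewrite e2 e1 /phi /sq; ring.
Qed.

Lemma phi_mono (G H : S -> {set S}) : is_partition G -> is_partition H ->
  cst G (c H) -> phi H <= phi G.
Proof. by move=> HG HH HC; rewrite -subr_ge0 -sq_diff // sq_ge0. Qed.

Lemma sq_ext X Y : (forall s, X s = Y s) -> sq X = sq Y.
Proof. by move=> H; apply: eq_bigr => s _; rewrite H. Qed.

Lemma sq_addk (k : R) X Y : 0 <= k ->
  k * sq (fun s => X s + Y s) <= (k + 1) * sq X + k * (k + 1) * sq Y.
Proof.
move=> k0; rewrite /sq /ip !mulr_sumr -big_split /=; apply: ler_sum => s _.
have := P0 s; have : 0 <= (X s - k * Y s) ^+ 2 by apply: sqr_ge0.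
set p := P s; set x := X s; set y := Y s => h1 h2.
rewrite -subr_ge0; set z := (_ - _).
have -> : z = p * (x - k * y) ^+ 2 by rewrite /z; ring.
by apply: mulr_ge0.
Qed.

Lemma sq_add2 X Y : sq (fun s => X s + Y s) <= 2 * sq X + 2 * sq Y.
Proof. by have := @sq_addk 1 X Y ler01; rewrite mul1r mul1r (_ : 1 + 1 = 2 :> R). Qed.

Hypothesis f01 : forall s, 0 <= f s <= 1.

Lemma c01 (G : S -> {set S}) s : 0 <= c G s <= 1.
Proof.
rewrite /c /cond_exp.
have A : 0 <= \sum_(t in G s) P t * f t.
  by apply: sumr_ge0 => t _; rewrite mulr_ge0 //; case/andP: (f01 t).
have B : \sum_(t in G s) P t * f t <= \sum_(t in G s) P t.
  apply: ler_sum => t _; rewrite ler_piMr //; by case/andP: (f01 t).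
have [Z0|Zn0] := eqVneq (\sum_(t in G s) P t) 0.
  by rewrite Z0 invr0 mulr0 lexx ler01.
have Zp : 0 < \sum_(t in G s) P t.
  by rewrite lt_def Zn0 sumr_ge0.
by rewrite divr_ge0 ?(ltW Zp) //= ler_pdivrMr // mul1r.
Qed.

Hypothesis Psum : \sum_s P s = 1.

Lemma phi01 (G : S -> {set S}) : 0 <= phi G <= 1.
Proof.
rewrite sq_ge0 /= /phi /sq /ip -Psum; apply: ler_sum => s _.
rewrite -mulrA ler_piMr //; case/andP: (c01 G s) => a b.
by rewrite -expr2 expr_le1.
Qed.

Lemma cheb X (eps : R) : 0 < eps ->
  1 - sq X / eps ^+ 2 <= prob P (fun s => `|X s| <= eps).
Proof.
move=> e0; rewrite /prob.
have Hs := Psum; rewrite (bigID (fun s => `|X s| <= eps)) /= in Hs.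
rewrite -Hs lerBlDr lerD2l.
have e2 : 0 < eps ^+ 2 by rewrite exprn_gt0.
rewrite ler_pdivlMr //.
apply: (le_trans _ (_ : \sum_(s | ~~ (`|X s| <= eps)) P s * X s * X s <= sq X)).
  rewrite mulr_suml; apply: ler_sum => s; rewrite -ltNge => H.
  rewrite -mulrA ler_wpM2l //.
  have hk : `|X s| ^+ 2 = X s ^+ 2 by rewrite real_normK ?num_real.
  move: hk; rewrite !expr2 => hk; nra.
rewrite /sq /ip [X in _ <= X](bigID (fun s => `|X s| <= eps)) /= lerDr.
apply: sumr_ge0 => s _; by rewrite -mulrA mulr_ge0 // -expr2 sqr_ge0.
Qed.
End Gen.



Section Sch.
Variables (n : nat) (pin pout : 'I_n.+1 -> 'I_n.+1).
Local Notation L := (size (st_block pin pout)).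

Lemma sched_block m j : (j < L)%N ->
  st_sched pin pout (m * L + j) = nth (ord0, ord0) (st_block pin pout) j.
Proof. by move=> Hj; rewrite /st_sched modnMDl modn_small. Qed.

Lemma mem_nonroot v : v != ord0 -> v \in nonroot n.
Proof. by move=> Hv; rewrite /nonroot mem_filter Hv mem_enum. Qed.

Lemma in_edge v : v != ord0 ->
  exists2 j, (j < L)%N & nth (ord0, ord0) (st_block pin pout) j = (v, pin v).
Proof.
move=> Hv.
have H : (v, pin v) \in st_block pin pout.
  by rewrite mem_cat; apply/orP; left; apply: map_f; rewrite mem_sort mem_nonroot.
by exists (index (v, pin v) (st_block pin pout)); rewrite ?index_mem ?nth_index.
Qed.

Lemma out_edge v : v != ord0 ->
  exists2 j, (j < L)%N & nth (ord0, ord0) (st_block pin pout) j = (pout v, v).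
Proof.
move=> Hv.
have H : (pout v, v) \in st_block pin pout.
  by rewrite mem_cat; apply/orP; right; apply: map_f; rewrite mem_sort mem_nonroot.
by exists (index (pout v, v) (st_block pin pout)); rewrite ?index_mem ?nth_index.
Qed.

Lemma L_le : (L <= 2 * n.+1)%N.
Proof.
rewrite /st_block size_cat !size_map !size_sort.
have : (size (nonroot n) <= n.+1)%N.
  by rewrite /nonroot size_filter (leq_trans (count_size _ _)) // size_enum_ord.
lia.
Qed.
End Sch.



Section Know.
Variables (R : realFieldType) (S : finType) (P f : S -> R).
Variables (n : nat) (pin pout : 'I_n.+1 -> 'I_n.+1) (Pi0 : 'I_n.+1 -> S -> {set S}).
Hypothesis HPi0 : forall i, is_partition (Pi0 i).
Hypothesis P0 : forall s, 0 <= P s.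

Local Notation sched := (st_sched pin pout).
Definition K t i := knowledge P f Pi0 sched t i.
Definition E t i := c P f (K t i).
Definition Phi t i := phi P f (K t i).

Lemma refine_part (G : S -> {set S}) (g : S -> R) : is_partition G -> is_partition (refine G g).
Proof.
move=> HG s; rewrite /refine; split.
  by rewrite inE (proj1 (HG s)) inE eqxx.
move=> s'; rewrite inE inE => /andP [H1 /eqP H2].
by rewrite (proj2 (HG s) s' H1) H2.
Qed.

Lemma K_part t i : is_partition (K t i).
Proof.
elim: t i => [|t IH] i /=; first exact: HPi0.
rewrite /K /=; case: ifP => _; last exact: IH.
exact: refine_part.
Qed.

Lemma K_sub1 t i s : K t.+1 i s \subset K t i s.
Proof.
rewrite /K /=; case: ifP => _ //; by rewrite /refine subsetIl.
Qed.

Lemma K_sub t t' i s : (t <= t')%N -> K t' i s \subset K t i s.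
Proof.
move=> /subnK <-; elim: (t' - t)%N => [|d IH] //.
by rewrite addSn (subset_trans (K_sub1 _ _ _)).
Qed.

Lemma cst_sub (G H : S -> {set S}) (X : S -> R) : (forall s, G s \subset H s) -> cst H X -> cst G X.
Proof. by move=> Hs HX s s' Hm; apply: HX; apply: (subsetP (Hs s)). Qed.

Lemma cst_msg t j i : sched t = (j, i) -> cst (K t.+1 i) (E t j).
Proof.
move=> Hst s s'; rewrite /K /= Hst /= eqxx /refine inE inE => /andP [_ /eqP].
done.
Qed.

Lemma Phi_mono t t' i : (t <= t')%N -> Phi t i <= Phi t' i.
Proof.
move=> Htt; apply: phi_mono => //; try exact: K_part.
apply: (cst_sub (H := K t i)); first by move=> s; apply: K_sub.
by apply: c_cst; apply: K_part.
Qed.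

Lemma msg_cst t t' j i : sched t = (j, i) -> (t < t')%N -> cst (K t' i) (E t j).
Proof.
move=> Hs Ht; apply: (cst_sub (H := K t.+1 i)); first by move=> s; apply: K_sub.
exact: cst_msg.
Qed.

Lemma Phi_msg t t' j i : sched t = (j, i) -> (t < t')%N -> Phi t j <= Phi t' i.
Proof. by move=> Hs Ht; apply: phi_mono => //; try exact: K_part; apply: msg_cst Hs Ht. Qed.

Lemma sq_msg t t' j i : sched t = (j, i) -> (t < t')%N ->
  sq P (fun s => E t' i s - E t j s) = Phi t' i - Phi t j.
Proof. by move=> Hs Ht; apply: sq_diff => //; try exact: K_part; apply: msg_cst Hs Ht. Qed.

Lemma sq_mono t t' i : (t <= t')%N ->
  sq P (fun s => E t' i s - E t i s) = Phi t' i - Phi t i.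
Proof.
move=> Htt; apply: sq_diff => //; try exact: K_part.
apply: (cst_sub (H := K t i)); first by move=> s; apply: K_sub.
by apply: c_cst; apply: K_part.
Qed.
End Know.



Section Chain.
Variables (R : realFieldType) (S : finType) (P f : S -> R).
Variables (n : nat) (pin pout : 'I_n.+1 -> 'I_n.+1) (Pi0 : 'I_n.+1 -> S -> {set S}).
Hypothesis HPi0 : forall i, is_partition (Pi0 i).
Hypothesis P0 : forall s, 0 <= P s.
Hypothesis pin0 : pin ord0 = ord0.
Hypothesis pout0 : pout ord0 = ord0.
Hypothesis pinn : forall v, iter n pin v = ord0.
Hypothesis poutn : forall v, iter n pout v = ord0.

Local Notation L := (size (st_block pin pout)).
Local Notation Ph := (Phi P f pin pout Pi0).
Local Notation Ex := (E P f pin pout Pi0).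

Lemma in_block m v : Ph (m * L) v <= Ph (m.+1 * L) (pin v).
Proof.
have [->|Hv] := eqVneq v ord0.
  by rewrite pin0; apply: Phi_mono => //; rewrite leq_mul2r leqnSn orbT.
have [j Hj Hn] := in_edge pin pout Hv.
have Hs := sched_block m Hj; rewrite Hn in Hs.
apply: (le_trans (@Phi_mono R S P f n pin pout Pi0 HPi0 P0 _ _ v (leq_addr j (m * L)))).
rewrite addnC; apply: Phi_msg => //; first by rewrite addnC Hs.
by rewrite mulSn; lia.
Qed.

Lemma out_block m w : Ph (m * L) (pout w) <= Ph (m.+1 * L) w.
Proof.
have [->|Hv] := eqVneq w ord0.
  by rewrite pout0; apply: Phi_mono => //; rewrite leq_mul2r leqnSn orbT.
have [j Hj Hn] := out_edge pin pout Hv.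
have Hs := sched_block m Hj; rewrite Hn in Hs.
apply: (le_trans (@Phi_mono R S P f n pin pout Pi0 HPi0 P0 _ _ (pout w) (leq_addr j (m * L)))).
rewrite addnC; apply: Phi_msg => //; first by rewrite addnC Hs.
by rewrite mulSn; lia.
Qed.

Lemma in_chain k m v : Ph (m * L) v <= Ph ((m + k) * L) (iter k pin v).
Proof.
elim: k m v => [|k IH] m v; first by rewrite addn0.
apply: (le_trans (in_block m v)).
by rewrite iterSr addnS -addSn; apply: IH.
Qed.

Lemma out_chain k m v : Ph (m * L) (iter k pout v) <= Ph ((m + k) * L) v.
Proof.
elim: k m v => [|k IH] m v; first by rewrite addn0.
rewrite iterS; apply: (le_trans (out_block m _)).
by rewrite addnS -addSn; apply: IH.
Qed.

Definition W := (2 * n).+1.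
Definition xs k := Ph (k * W * L) ord0.

Lemma win_lo k v t : ((k * W + n) * L <= t)%N -> xs k <= Ph t v.
Proof.
move=> Ht; rewrite /xs -(poutn v).
apply: (le_trans (out_chain n (k * W) v)).
exact: Phi_mono.
Qed.

Lemma win_hi k v t : (t <= (k * W + n.+1) * L)%N -> Ph t v <= xs k.+1.
Proof.
move=> Ht; apply: (le_trans (@Phi_mono R S P f n pin pout Pi0 HPi0 P0 _ _ v Ht)).
apply: (le_trans (in_chain n _ v)); rewrite pinn /xs.
have -> : ((k * W + n.+1 + n) = k.+1 * W)%N by rewrite /W; lia.
done.
Qed.

Definition Tk k := ((k * W + n.+1) * L)%N.

Lemma edge_bound k v : v != ord0 ->
  sq P (fun s => Ex (Tk k) v s - Ex (Tk k) (pin v) s) <= 4 * (xs k.+1 - xs k).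
Proof.
move=> Hv.
have [j Hj Hn] := in_edge pin pout Hv.
have Hs := sched_block (k * W + n) Hj; rewrite Hn in Hs.
set t := ((k * W + n) * L + j)%N in Hs.
have tT : (t < Tk k)%N by rewrite /t /Tk addnS mulSn; lia.
have h1 := @sq_msg R S P f n pin pout Pi0 HPi0 P0 _ _ _ _ Hs tT.
have h2 := @sq_mono R S P f n pin pout Pi0 HPi0 P0 _ _ v (ltnW tT).
have lo : xs k <= Ph t v by apply: win_lo; rewrite leq_addr.
have hi1 : Ph (Tk k) (pin v) <= xs k.+1 by apply: win_hi.
have hi2 : Ph (Tk k) v <= xs k.+1 by apply: win_hi.
have := sq_add2 P0 (fun s => Ex (Tk k) v s - Ex t v s)
                   (fun s => - (Ex (Tk k) (pin v) s - Ex t v s)).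
have -> : sq P (fun s => - (Ex (Tk k) (pin v) s - Ex t v s))
        = sq P (fun s => Ex (Tk k) (pin v) s - Ex t v s).
  by rewrite /sq /ip; apply: eq_bigr => s _; ring.
rewrite (@sq_ext R S P _ (fun s => Ex (Tk k) v s - Ex (Tk k) (pin v) s)); last first.
  by move=> s; ring.
rewrite h1 h2 => H; apply: (le_trans H); lra.
Qed.

Lemma xs_mono k : xs k <= xs k.+1.
Proof. by apply: Phi_mono => //; rewrite leq_mul2r mulSn leq_addl orbT. Qed.

Lemma sq_opp X : sq P (fun s => - X s) = sq P X.
Proof. by rewrite /sq /ip; apply: eq_bigr => s _; ring. Qed.

Lemma path_bound k m v :
  sq P (fun s => Ex (Tk k) v s - Ex (Tk k) (iter m pin v) s)
    <= (m%:R) ^+ 2 * (4 * (xs k.+1 - xs k)).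
Proof.
have c0 : 0 <= 4 * (xs k.+1 - xs k) by have := xs_mono k; lra.
set c := 4 * _ in c0 *.
elim: m => [|m IH].
  rewrite expr0n /= mul0r (@sq_ext R S P _ (fun _ => 0)); last by move=> s /=; ring.
  by rewrite /sq /ip big1 // => s _; rewrite !mulr0.
set w := iter m pin v.
have HY : sq P (fun s => Ex (Tk k) w s - Ex (Tk k) (pin w) s) <= c.
  have [->|Hw] := eqVneq w ord0.
    rewrite pin0 (@sq_ext R S P _ (fun _ => 0)); last by move=> s /=; ring.
    by rewrite /sq /ip big1 // => s _; rewrite !mulr0.
  exact: edge_bound.
rewrite iterS -/w.
rewrite (@sq_ext R S P _ (fun s => (Ex (Tk k) v s - Ex (Tk k) w s) +
                                 (Ex (Tk k) w s - Ex (Tk k) (pin w) s))); last first.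
  by move=> s; ring.
case: m IH @w HY => [|m] IH w HY.
  rewrite (@sq_ext R S P _ (fun s => (Ex (Tk k) w s - Ex (Tk k) (pin w) s))); last first.
    by move=> s /=; rewrite /w /=; ring.
  by rewrite expr1n mul1r.
have kp : 0 < (m.+1)%:R :> R by rewrite ltr0n.
have := sq_addk P0 (fun s => Ex (Tk k) v s - Ex (Tk k) w s)
   (fun s => Ex (Tk k) w s - Ex (Tk k) (pin w) s) (ltW kp).
set A := sq P _; set B := sq P _; set D := sq P _ => H.
rewrite -/w in IH; rewrite -/B in IH; rewrite -/D in HY.
rewrite -(ler_pM2l kp); apply: (le_trans H).
have e : (m.+2)%:R = (m.+1)%:R + 1 :> R by rewrite -addn1 natrD.
rewrite e.
have Bge : 0 <= B by apply: sq_ge0.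
have Dge : 0 <= D by apply: sq_ge0.
set kk := (m.+1)%:R in kp IH *.
have k1 : 0 <= kk + 1 by lra.
apply: (le_trans (y := (kk + 1) * (kk ^+ 2 * c) + kk * (kk + 1) * c)).
  apply: lerD; first exact: ler_wpM2l.
  by apply: ler_wpM2l => //; apply: mulr_ge0 => //; apply: ltW.
by rewrite le_eqVlt; apply/orP; left; apply/eqP; ring.
Qed.

Lemma pair_bound k i j :
  sq P (fun s => Ex (Tk k) i s - Ex (Tk k) j s) <= 16 * (n%:R) ^+ 2 * (xs k.+1 - xs k).
Proof.
have Hi := path_bound k n i; have Hj := path_bound k n j.
rewrite pinn in Hi; rewrite pinn in Hj.
have := sq_add2 P0 (fun s => Ex (Tk k) i s - Ex (Tk k) ord0 s)
                   (fun s => - (Ex (Tk k) j s - Ex (Tk k) ord0 s)).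
rewrite sq_opp (@sq_ext R S P _ (fun s => Ex (Tk k) i s - Ex (Tk k) j s)); last first.
  by move=> s; ring.
move=> H; apply: (le_trans H).
have e : forall z : R, n%:R ^+ 2 * (4 * z) = 4 * (n%:R ^+ 2 * z) by move=> z; ring.
rewrite e in Hi; rewrite e in Hj; rewrite -mulrA.
set z := n%:R ^+ 2 * _ in Hi Hj *.
lra.
Qed.
End Chain.



Lemma fin_stab (R : realFieldType) (T : finType) (F : nat -> T) (g : T -> R) (th : R) :
  0 < th -> exists k, g (F k.+1) - g (F k) <= th.
Proof.
move=> th0.
case: (boolP [exists k : 'I_#|T|.+1, g (F k.+1) - g (F k) <= th]).
  by case/existsP => k Hk; exists k.
move/existsPn => H.
have inc : forall i j, (i < j)%N -> (j <= #|T|.+1)%N -> g (F i) < g (F j).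
  move=> i j; elim: j => [|j IH] //= Hij Hj.
  have Hj' : (j < #|T|.+1)%N by [].
  have := H (Ordinal Hj'); rewrite -ltNge /= => Hlt.
  rewrite ltnS leq_eqVlt in Hij; case/orP: Hij => [/eqP ->|Hij].
    lra.
  have := IH Hij (ltnW Hj); lra.
have inj : injective (fun i : 'I_#|T|.+1 => F i).
  move=> i j /= Hij; apply/val_inj => /=.
  have [lt|gt|eq] := ltngtP i j => //.
    by have := inc _ _ lt (ltnW (ltn_ord j)); rewrite Hij ltxx.
  by have := inc _ _ gt (ltnW (ltn_ord i)); rewrite Hij ltxx.
have := leq_card _ inj; rewrite card_ord ltnn //.
Qed.

Lemma phi_ext (R : realFieldType) (S : finType) (P f : S -> R) (G H : S -> {set S}) :
  (forall s, G s = H s) -> phi P f G = phi P f H.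
Proof. by move=> e; rewrite /phi /sq /ip /c /cond_exp; apply: eq_bigr => s _; rewrite e. Qed.

Theorem lemma3 (R : realFieldType) :
  exists C : R, 0 < C /\
  forall (n : nat) (e : rel 'I_n.+1) (pin pout : 'I_n.+1 -> 'I_n.+1)
         (S : finType) (P f : S -> R) (Pi0 : 'I_n.+1 -> S -> {set S})
         (eps delta : R),
    (forall u v, connect e u v) ->
    in_tree e pin -> out_tree e pout ->
    is_prior P ->
    (forall s, 0 <= f s <= 1) ->
    (forall i, is_partition (Pi0 i)) ->
    0 < eps -> 0 < delta ->
    exists T : nat,
      T%:R <= C * (n.+1)%:R ^+ 7 / (delta * eps) ^+ 2 /\
      forall i k : 'I_n.+1,
        1 - delta <
        prob P (fun s => `|expectation P f Pi0 (st_sched pin pout) T i s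
                          - expectation P f Pi0 (st_sched pin pout) T k s| <= eps).
Proof.
exists 132; split; first by [].
move=> n e pin pout S P f Pi0 eps delta _ [pin0 Hin] [pout0 Hout] [P0 Psum] f01 HPi0 e0 d0.
have pinn : forall v, iter n pin v = ord0 by move=> v; case: (Hin v).
have poutn : forall v, iter n pout v = ord0 by move=> v; case: (Hout v).
set N := (n.+1)%:R : R.
have N1 : 1 <= N by rewrite /N ler1n.
have bnd0 : 0 <= 132 * N ^+ 7 / (delta * eps) ^+ 2.
  rewrite divr_ge0 ?sqr_ge0 // mulr_ge0 // exprn_ge0 //; lra.
have [d1|d1] := ltP 1 delta.
  exists 0%N; split; first by rewrite mulr0n.
  move=> i k; rewrite /prob (lt_le_trans (y := 0)) //; first lra.
  by apply: sumr_ge0 => s _.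
have [e1|e1] := leP 1 eps.
  exists 0%N; split; first by rewrite mulr0n.
  move=> i k; rewrite /prob (eq_bigl xpredT) ?Psum; first lra.
  move=> s /=; apply: (le_trans _ e1).
  have := c01 P0 f01 (knowledge P f Pi0 (st_sched pin pout) 0 i) s.
  have := c01 P0 f01 (knowledge P f Pi0 (st_sched pin pout) 0 k) s.
  rewrite /c /expectation => /andP [a1 a2] /andP [b1 b2].
  rewrite ler_norml; apply/andP; split; lra.
set th := delta * eps ^+ 2 / (32 * N ^+ 2).
have th0 : 0 < th by rewrite /th divr_gt0 ?mulr_gt0 ?exprn_gt0 //; lra.
set x := xs P f pin pout Pi0.
have ex : exists k, x k.+1 - x k <= th.
  have := @fin_stab R {ffun S -> {set S}}
    (fun k => [ffun s => K P f pin pout Pi0 (k * W n * size (st_block pin pout)) ord0 s])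
    (fun G => phi P f (fun s => G s)) th th0.
  have eq : forall k, phi P f (fun s => [ffun s => K P f pin pout Pi0 (k * W n * size (st_block pin pout)) ord0 s] s) = x k.
    by move=> k; rewrite /x /xs /Phi; apply: phi_ext => s; rewrite ffunE.
  by case=> k Hk; exists k; move: Hk; rewrite !eq.
case: (ex_minnP ex) => k Hk Hmin.
have lowk : k%:R * th <= x k - x 0%N.
  have : forall m, (m <= k)%N -> m%:R * th <= x m - x 0%N.
    elim=> [|m IH] Hm; first by rewrite mul0r subrr.
    have Hlt : ~~ (x m.+1 - x m <= th).
      by apply/negP => H; have := Hmin m H; lia.
    rewrite -ltNge in Hlt; have := IH (ltnW Hm).
    rewrite -natr1 mulrDl mul1r; lra.
  by apply.
have x01 : forall m, 0 <= x m <= 1 by move=> m; apply: phi01.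
have kth : k%:R * th <= 1 by have := x01 k; have := x01 0%N; lra.
exists (Tk pin pout k); split.
  have HL := L_le pin pout.
  have Tn : (Tk pin pout k <= (k.+1 * (2 * n.+1)) * (2 * n.+1))%N.
    rewrite /Tk /W; apply: leq_mul => //; nia.
  have Tr : (Tk pin pout k)%:R <= (k%:R + 1) * (2 * N) * (2 * N) :> R.
    move: Tn; rewrite -(ler_nat R) !natrM -natr1 /N => H; apply: (le_trans H); exact: lexx.
  apply: (le_trans Tr).
  have de0 : 0 < (delta * eps) ^+ 2 by rewrite exprn_gt0 // mulr_gt0.
  rewrite ler_pdivlMr //.
  have kd : k%:R * delta * eps ^+ 2 <= 32 * N ^+ 2.
    move: kth; rewrite /th mulrA ler_pdivrMr ?mul1r //.
      by rewrite mulrA.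
    rewrite mulr_gt0 // exprn_gt0 //; lra.
  have k0 : 0 <= k%:R :> R by rewrite ler0n.
  set kk := k%:R in kd k0 *.
  have -> : (kk + 1) * (2 * N) * (2 * N) * (delta * eps) ^+ 2
     = 4 * N ^+ 2 * delta * (kk * delta * eps ^+ 2) + 4 * N ^+ 2 * (delta * eps) ^+ 2.
    by ring.
  have a1 : 4 * N ^+ 2 * delta * (kk * delta * eps ^+ 2) <= 4 * N ^+ 2 * (32 * N ^+ 2).
    rewrite -mulrA ler_wpM2l ?mulr_ge0 ?exprn_ge0 //; try lra.
    apply: (le_trans _ kd); rewrite -[X in _ <= X]mul1r ler_wpM2r //.
    by rewrite !mulr_ge0 ?exprn_ge0 // ltW.
  have de1 : (delta * eps) ^+ 2 <= 1.
    rewrite expr_le1 ?mulr_ge0 ?ltW //; nra.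
  have a2 : 4 * N ^+ 2 * (delta * eps) ^+ 2 <= 4 * N ^+ 2.
    by rewrite -[X in _ <= X]mulr1 ler_wpM2l // mulr_ge0 // exprn_ge0 //; lra.
  have N4 : N ^+ 4 <= N ^+ 7 by apply: ler_weXn2l.
  have N27 : N ^+ 2 <= N ^+ 7 by apply: ler_weXn2l.
  have e4 : 4 * N ^+ 2 * (32 * N ^+ 2) = 128 * N ^+ 4 by ring.
  lra.
move=> i j.
have Hb := pair_bound f HPi0 P0 pin0 pout0 pinn poutn k i j.
have Hc := cheb P0 Psum (fun s => E P f pin pout Pi0 (Tk pin pout k) i s - E P f pin pout Pi0 (Tk pin pout k) j s) e0.
apply: (lt_le_trans _ Hc).
move: Hb; set Q := sq P _ => Hb.
have n2 : n%:R ^+ 2 <= N ^+ 2 :> R.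
  by rewrite lerXn2r ?nnegrE ?ler0n // /N ler_nat.
have N0 : N != 0 by rewrite /N pnatr_eq0.
have h1 : 16 * n%:R ^+ 2 * th = delta * eps ^+ 2 / 2 * (n%:R ^+ 2 / N ^+ 2).
  by rewrite /th; field; rewrite nat1r pnatr_eq0.
have h2 : n%:R ^+ 2 / N ^+ 2 <= 1 :> R.
  by rewrite ler_pdivrMr ?exprn_gt0 ?mul1r // (lt_le_trans ltr01).
have de : 0 < delta * eps ^+ 2 / 2 by rewrite divr_gt0 // mulr_gt0 // exprn_gt0.
have h3 : 16 * n%:R ^+ 2 * th <= delta * eps ^+ 2 / 2.
  by rewrite h1 ler_piMr // ?ltW // divr_ge0 ?exprn_ge0 ?ler0n // ltW // (lt_le_trans ltr01).
have h4 : 16 * n%:R ^+ 2 * (x k.+1 - x k) <= 16 * n%:R ^+ 2 * th.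
  by rewrite ler_wpM2l // mulr_ge0 // exprn_ge0.
have hQ : Q <= delta * eps ^+ 2 / 2.
  by apply: (le_trans Hb); apply: (le_trans h4).
have e2 : 0 < eps ^+ 2 by rewrite exprn_gt0.
have : Q / eps ^+ 2 <= delta / 2.
  rewrite ler_pdivrMr //; apply: (le_trans hQ).
  by rewrite le_eqVlt; apply/orP; left; apply/eqP; field.
lra.
Qed.
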